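(* Let $G$ be a fair complete tripartite graph on an even number of vertices whose edges are coloured red and blue. Then there are two vertex-disjoint connected matchings of distinct colours (one red, one blue) that together cover all vertices of $G$.
   Context: A complete tripartite graph has three non-empty partition classes; it is fair if no partition class contains more than half of the vertices. The edge colouring is an arbitrary red/blue assignment. A monochromatic matching is called connected if all its edges lie in a single connected component of the subgraph formed by the edges of that colour. Matchings may be empty. *)

(* Defs.v *)
From mathcomp Require Import all_boot.
Set Implicit Arguments. Unset Strict Implicit. Unset Printing Implicit Defensive.

Definition tri_adj (T : finType) (part : T -> 'I_3) : rel T :=
  fun x y => part x != part y.

(* Red/blue edge colouring: c x y = true means edge xy is red
   (c is required to be symmetric in the theorem). *)
Definition red_rel (T : finType) (part : T -> 'I_3) (c : T -> T -> bool) : rel T :=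
  fun x y => tri_adj part x y && c x y.
Definition blue_rel (T : finType) (part : T -> 'I_3) (c : T -> T -> bool) : rel T :=
  fun x y => tri_adj part x y && ~~ c x y.

Definition is_matching (T : finType) (r : rel T) (M : {set {set T}}) : Prop :=
  (forall e, e \in M -> exists x y, [/\ x != y, r x y & e = [set x; y]])
  /\ trivIset M.

(* Connected matching: all its edges lie in one connected component of the
   graph with edge relation r (the colour class). Empty matchings allowed. *)
Definition connected_matching (T : finType) (r : rel T) (M : {set {set T}}) : Prop :=
  is_matching r M /\
  (forall e f x y, e \in M -> f \in M -> x \in e -> y \in f -> connect r x y).

(* Main.v *)
Require Import Defs.
From mathcomp Require Import all_boot zify.
Set Implicit Arguments. Unset Strict Implicit.

Section PM.
Variables (T : finType) (part : T -> 'I_3).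

Lemma pm_exists (x0 : T) :
  (forall i : 'I_3, 2 * #|[set x | part x == i]| <= #|T|) ->
  ~~ odd #|T| ->
  exists f : T -> T, (forall x, f (f x) = x) /\ (forall x, part x != part (f x)).
Proof.
move=> hfair hev.
set n := #|T|.
have n0 : 0 < n by apply/card_gt0P; exists x0.
set h := n./2.
have nh : n = h + h.
  by rewrite addnn /h -[n in LHS]odd_double_half (negbTE hev).
pose leT := fun x y : T => (part x <= part y)%N.
pose s := sort leT (enum T).
have ss : size s = n by rewrite size_sort /n cardT.
have us : uniq s by rewrite sort_uniq enum_uniq.
have ms : forall x, x \in s by move=> x; rewrite mem_sort mem_enum.
have srt : sorted leT s by apply: sort_sorted => x y; exact: leq_total.
have key : forall y lo, lo + h < n -> part (nth y s lo) != part (nth y s (lo + h)).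
  move=> y lo Hlo; apply/negP => /eqP E.
  set p := part (nth y s lo).
  have hom := sorted_leq_nth (fun a b c => @leq_trans (part a) (part b) (part c))
     (fun a => leqnn (part a)) y srt.
  have allp : forall k, lo <= k <= lo + h -> part (nth y s k) = p.
    move=> k /andP[k1 k2]; apply: val_inj; apply/eqP; rewrite eqn_leq.
    have Hk : k \in [pred m | m < size s] by rewrite inE ss; lia.
    have Hl : lo \in [pred m | m < size s] by rewrite inE ss; lia.
    have Hh : lo + h \in [pred m | m < size s] by rewrite inE ss; lia.
    apply/andP; split.
      by rewrite /p E; exact: (hom k (lo + h) Hk Hh k2).
    exact: (hom lo k Hl Hk k1).
  pose P := fun x => part x == p.
  set sl := take h.+1 (drop lo s).
  have szl : size sl = h.+1 by rewrite size_takel // size_drop ss; lia.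
  have alls : all P sl.
    apply/(all_nthP y) => k Hk; rewrite nth_take; last by rewrite -szl.
    rewrite nth_drop /P allp //; rewrite szl in Hk; lia.
  have cs : h.+1 <= count P s.
    rewrite -[s](cat_take_drop lo) count_cat -[drop lo s](cat_take_drop h.+1) count_cat.
    move: alls; rewrite all_count => /eqP; rewrite -/sl szl => ->; lia.
  have ce : count P s = #|[set x | part x == p]|.
    rewrite -size_filter -(card_uniqP (filter_uniq _ us)).
    by apply: eq_card => x; rewrite mem_filter ms inE andbT.
  have := hfair p; rewrite -ce; lia.
pose f := fun x => nth x s ((index x s + h) %% n).
have ilt : forall x, index x s < n by move=> x; rewrite -ss index_mem.
have ifx : forall x, index (f x) s = (index x s + h) %% n.
  by move=> x; rewrite /f index_uniq // ss ltn_pmod.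
exists f; split.
  move=> x; rewrite {1}/f ifx modnDml -addnA -nh modnDr modn_small //.
  exact: nth_index.
move=> x; rewrite /f.
set i := index x s.
have xi : x = nth x s i by rewrite nth_index.
have Hi := ilt x.
case: (ltnP i h) => Hih.
  rewrite modn_small; last by rewrite -/i; lia.
  by rewrite {1}xi; apply: key; lia.
have -> : (i + h) %% n = i - h.
  have -> : i + h = (i - h) + n by lia.
  by rewrite modnDr modn_small; lia.
rewrite {1}xi eq_sym.
have -> : i = (i - h) + h by lia.
rewrite addnK; apply: key; lia.
Qed.
End PM.
Section Fin.
Variables (T : finType) (part : T -> 'I_3) (c : T -> T -> bool).
Hypothesis hc : forall x y, c x y = c y x.

Lemma red_sym : symmetric (red_rel part c).
Proof. by move=> x y; rewrite /red_rel /tri_adj eq_sym hc. Qed.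
Lemma blue_sym : symmetric (blue_rel part c).
Proof. by move=> x y; rewrite /blue_rel /tri_adj eq_sym hc. Qed.

Lemma match_of (f : T -> T) (r : rel T) (Q : pred T) :
  symmetric r -> (forall x, f (f x) = x) -> (forall x, x != f x) ->
  (forall x, Q x -> Q (f x)) -> (forall x, Q x -> r x (f x)) ->
  (forall x y, Q x -> Q y -> connect r x y) ->
  connected_matching r [set [set x; f x] | x in Q] /\
  cover [set [set x; f x] | x in Q] = [set x | Q x].
Proof.
move=> rs ff fne Qc Qr Qconn.
have cs := sym_connect_sym rs.
have memM : forall e z, e \in [set [set x; f x] | x in Q] -> z \in e ->
    exists2 a, Q a & connect r z a.
  move=> e z /imsetP[a Qa ->]; rewrite !inE => /orP[/eqP->|/eqP->].
    by exists a.
  by exists a => //; rewrite cs; apply: connect1; apply: Qr.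
split; last first.
  apply/setP => z; rewrite inE; apply/bigcupP/idP.
    move=> [B /imsetP[x Qx ->]]; rewrite !inE => /orP[/eqP->|/eqP->] //.
    exact: Qc.
  by move=> Qz; exists [set z; f z]; [apply: imset_f | rewrite !inE eqxx].
split; last first.
  move=> e g x y He Hg Hx Hy.
  have [a Qa xa] := memM e x He Hx.
  have [b Qb yb] := memM g y Hg Hy.
  apply: connect_trans xa _; apply: connect_trans (Qconn a b Qa Qb) _.
  by rewrite cs.
split.
  move=> e /imsetP[x Qx ->]; exists x, (f x); split => //; exact: Qr.
apply/trivIsetP => A B /imsetP[x Qx ->] /imsetP[y Qy ->] neq.
rewrite -setI_eq0; apply/eqP/setP => z; rewrite !inE; apply/negP.
move=> /andP[/orP[/eqP zx|/eqP zx] /orP[/eqP zy|/eqP zy]]; move: neq; subst z.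
- by rewrite zy eqxx.
- by rewrite zy ff setUC eqxx.
- by rewrite -zy ff setUC eqxx.
- by rewrite -[x]ff zy ff eqxx.
Qed.

Lemma final (f : T -> T) : (forall x, f (f x) = x) -> (forall x, part x != part (f x)) ->
 (forall x y, c x (f x) -> c y (f y) -> connect (red_rel part c) x y) ->
 (forall x y, ~~ c x (f x) -> ~~ c y (f y) -> connect (blue_rel part c) x y) ->
 exists R B : {set {set T}},
    [/\ connected_matching (red_rel part c) R,
        connected_matching (blue_rel part c) B,
        [disjoint cover R & cover B] &
        cover R :|: cover B = [set: T]].
Proof.
move=> ff fp RC BC.
have fne : forall x, x != f x by move=> x; apply: contraNneq (fp x) => <-.
have [CR coR] := @match_of f _ (fun x => c x (f x)) red_sym ff fne
  (fun x _ => ltac:(by rewrite /= ff hc)) (fun x h => ltac:(by move: h; rewrite /= /red_rel /tri_adj fp)) RC.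
have [CB coB] := @match_of f _ (fun x => ~~ c x (f x)) blue_sym ff fne
  (fun x _ => ltac:(by rewrite /= ff hc)) (fun x h => ltac:(by move: h; rewrite /= /blue_rel /tri_adj fp)) BC.
eexists; eexists; split; [exact: CR | exact: CB | |].
  rewrite coR coB -setI_eq0; apply/eqP/setP => z; rewrite !inE.
  by case: (c z (f z)).
by rewrite coR coB; apply/setP => z; rewrite !inE; case: (c z (f z)).
Qed.
End Fin.
Section Step.
Variables (T : finType) (part : T -> 'I_3) (c : T -> T -> bool).
Hypothesis hc : forall x y, c x y = c y x.

Lemma step (f : T -> T) a b cc d :
  (forall x, f (f x) = x) -> (forall x, part x != part (f x)) ->
  f a = b -> f cc = d -> a != b -> a != cc -> a != d -> b != cc -> b != d -> cc != d ->
  part a != part cc -> part b != part d -> ~~ c a cc -> ~~ c b d -> c a b ->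
  exists g : T -> T, [/\ forall x, g (g x) = x, forall x, part x != part (g x) &
     #|[set x | c x (g x)]| < #|[set x | c x (f x)]| ].
Proof.
move=> ff fp fa fc ab ac ad bc bd cd pac pbd nac nbd cab.
have fb : f b = a by rewrite -fa ff.
have fd : f d = cc by rewrite -fc ff.
pose g x := if x == a then cc else if x == cc then a else if x == b then d
  else if x == d then b else f x.
have ba : b != a by rewrite eq_sym.
have ca : cc != a by rewrite eq_sym.
have da : d != a by rewrite eq_sym.
have cb : cc != b by rewrite eq_sym.
have db : d != b by rewrite eq_sym.
have dc : d != cc by rewrite eq_sym.
have E := (negbTE ab, negbTE ac, negbTE ad, negbTE bc, negbTE bd, negbTE cd,
           negbTE ba, negbTE ca, negbTE da, negbTE cb, negbTE db, negbTE dc).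
have gE : forall x, x != a -> x != b -> x != cc -> x != d -> g x = f x.
  by move=> x xa xb xc xd; rewrite /g (negbTE xa) (negbTE xb) (negbTE xc) (negbTE xd).
have fN : forall x y, x != f y -> f x != y.
  by move=> x y; apply: contra_neq => <-; rewrite ff.
have ga : g a = cc by rewrite /g eqxx.
have gc : g cc = a by rewrite /g !E eqxx.
have gb : g b = d by rewrite /g !E eqxx.
have gd : g d = b by rewrite /g !E eqxx.
have cases : forall x, [\/ x = a, x = b, x = cc | x = d \/ [/\ x != a, x != b, x != cc & x != d]].
  move=> x; case: (eqVneq x a) => [->|xa]; first by constructor 1.
  case: (eqVneq x b) => [->|xb]; first by constructor 2.
  case: (eqVneq x cc) => [->|xc]; first by constructor 3.
  case: (eqVneq x d) => [->|xd]; first by constructor 4; left.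
  by constructor 4; right.
have redg : forall x, c x (g x) -> [/\ x != a, x != b, x != cc & x != d].
  move=> x; case: (cases x) => [->|->|->|[->|//]].
  - by rewrite ga (negbTE nac).
  - by rewrite gb (negbTE nbd).
  - by rewrite gc hc (negbTE nac).
  - by rewrite gd hc (negbTE nbd).
exists g; split.
- move=> x; case: (cases x) => [->|->|->|[->|[xa xb xc xd]]].
  + by rewrite ga gc.
  + by rewrite gb gd.
  + by rewrite gc ga.
  + by rewrite gd gb.
  by rewrite gE // gE ?ff //; apply: fN; rewrite ?fa ?fb ?fc ?fd.
- move=> x; case: (cases x) => [->|->|->|[->|[xa xb xc xd]]].
  + by rewrite ga.
  + by rewrite gb.
  + by rewrite gc eq_sym.
  + by rewrite gd eq_sym.
  by rewrite gE.
apply: proper_card; apply/properP; split.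
  apply/subsetP => x; rewrite !inE => H.
  by case: (redg x H) => xa xb xc xd; rewrite -gE.
by exists a; rewrite !inE ?fa // ga (negbTE nac).
Qed.
End Step.
Lemma third (x y : 'I_3) : exists i : 'I_3, i != x /\ i != y.
Proof.
move: x y => [[|[|[|//]]] ?] [[|[|[|//]]] ?].
all: first [by exists (@Ordinal 3 0 isT) | by exists (@Ordinal 3 1 isT) | by exists (@Ordinal 3 2 isT)].
Qed.
Lemma L1 (pa pb pc pd : 'I_3) : pa != pb -> pc != pd ->
  ((pa != pc) && (pb != pd)) || ((pa != pd) && (pb != pc)).
Proof.
by move: pa pb pc pd => [[|[|[|//]]] ?] [[|[|[|//]]] ?] [[|[|[|//]]] ?] [[|[|[|//]]] ?].
Qed.

Lemma cm_eq (T : finType) (r1 r2 : rel T) M : r1 =2 r2 ->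
  connected_matching r1 M -> connected_matching r2 M.
Proof.
move=> E [[H1 H2] H3]; split; [split|] => //.
  by move=> e /H1 [x [y [xy rxy ->]]]; exists x, y; rewrite -E.
by move=> e f x y he hf hx hy; rewrite -(eq_connect E); exact: H3 he hf hx hy.
Qed.

Section Main.
Variables (T : finType) (part : T -> 'I_3) (c : T -> T -> bool).
Hypothesis hc : forall x y, c x y = c y x.
Local Notation red := (red_rel part c).
Local Notation blue := (blue_rel part c).

Lemma stepR (f : T -> T) : (forall x, f (f x) = x) -> (forall x, part x != part (f x)) ->
  ~~ [forall x, forall y, (c x (f x) && c y (f y)) ==> connect red x y] ->
  exists g : T -> T, [/\ forall x, g (g x) = x, forall x, part x != part (g x) &
     #|[set x | c x (g x)]| < #|[set x | c x (f x)]| ].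
Proof.
move=> ff fp /forallPn [a /forallPn [cc]]; rewrite negb_imply => /andP[/andP[ra rc] nconn].
have cs := sym_connect_sym (@red_sym _ part c hc).
have redE : forall x, c x (f x) -> red x (f x) by move=> x h; rewrite /red_rel /tri_adj fp.
have rfc : connect red (f cc) cc by rewrite cs; apply: connect1; exact: redE.
have raf : connect red a (f a) by apply: connect1; exact: redE.
have ab : a != f a by apply: contraNneq (fp a) => <-.
have ac : a != cc by apply: contraNneq nconn => ->; exact: connect0.
have ad : a != f cc by apply: contraNneq nconn => e; rewrite {1}e.
have bc : f a != cc by apply: contraNneq nconn => e; rewrite -e.
have bd : f a != f cc by apply: contra_neq ac => e; rewrite -[a]ff e ff.
have cd : cc != f cc by apply: contraNneq (fp cc) => <-.
case/orP: (L1 (fp a) (fp cc)) => /andP[p1 p2].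
  apply: (@step _ part c hc f a (f a) cc (f cc) ff fp erefl erefl ab ac ad bc bd cd p1 p2) => //.
    apply: contra nconn => h; apply: connect1; by rewrite /red_rel /tri_adj p1.
  apply: contra nconn => h; apply: connect_trans raf _.
  apply: connect_trans _ rfc; apply: connect1; by rewrite /red_rel /tri_adj p2.
have fd : f (f cc) = cc by rewrite ff.
apply: (@step _ part c hc f a (f a) (f cc) cc ff fp erefl fd ab ad ac bd bc _) => //.
- by rewrite eq_sym.
- apply: contra nconn => h; apply: connect_trans _ rfc; apply: connect1.
  by rewrite /red_rel /tri_adj p1.
- apply: contra nconn => h; apply: connect_trans raf _; apply: connect1.
  by rewrite /red_rel /tri_adj p2.
Qed.

Lemma exch :
  (forall x y u v, blue x y -> blue u v -> connect blue x u) ->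
  forall f : T -> T, (forall x, f (f x) = x) -> (forall x, part x != part (f x)) ->
  exists R B : {set {set T}},
    [/\ connected_matching red R, connected_matching blue B,
        [disjoint cover R & cover B] & cover R :|: cover B = [set: T]].
Proof.
move=> BC f.
move: {2}#|[set x | c x (f x)]| (leqnn #|[set x | c x (f x)]|) => k.
elim: k f => [|k IH] f Hk ff fp;
  (case: (boolP [forall x, forall y, (c x (f x) && c y (f y)) ==> connect red x y]) => H;
  [ apply: (final hc ff fp);
    [ by move=> x y hx hy; move/forallP: H => /(_ x) /forallP /(_ y); rewrite hx hy
    | by move=> x y hx hy; apply: (BC x (f x) y (f y)); rewrite /blue_rel /tri_adj fp ?hx ?hy ]
  | have [g [gg gp gl]] := stepR ff fp H ]).
  by move: gl; rewrite ltnNge (leq_trans Hk).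
by apply: (IH g) => //; rewrite -ltnS (leq_trans gl).
Qed.

Lemma spanning (a b cc d : T) : (forall i : 'I_3, exists x : T, part x = i) ->
  red a b -> red cc d -> ~~ connect red a cc -> forall u v, connect blue u v.
Proof.
move=> surj rab rcd nac.
have rs := sym_connect_sym (@red_sym _ part c hc).
have bs := sym_connect_sym (@blue_sym _ part c hc).
have cross : forall x y, connect red a x -> ~~ connect red a y -> part x != part y ->
    connect blue x y.
  move=> x y hx hy pxy; apply: connect1; rewrite /blue_rel /tri_adj pxy /=.
  apply: contra hy => h; apply: connect_trans hx _; apply: connect1.
  by rewrite /red_rel /tri_adj pxy.
have gen : forall x1 x2 y1 y2, connect red a x1 -> connect red a x2 ->
    ~~ connect red a y1 -> ~~ connect red a y2 -> part x1 != part x2 ->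
    part y1 != part y2 -> connect blue x1 y1.
  move=> x1 x2 y1 y2 h1 h2 k1 k2 p12 q12.
  have [e|e] := eqVneq (part x1) (part y1); last by apply: cross.
  have c12 : connect blue x1 y2 by apply: cross => //; rewrite e.
  have c21 : connect blue x2 y1 by apply: cross => //; rewrite -e eq_sym.
  case: (eqVneq (part x2) (part y2)) => e2; last first.
    apply: connect_trans c12 _; apply: connect_trans _ c21.
    by rewrite bs; apply: cross.
  have [i [i1 i2]] := third (part x1) (part x2).
  have [w ew] := surj i; rewrite -ew in i1 i2.
  case: (boolP (connect red a w)) => hw.
    apply: connect_trans c12 _; apply: connect_trans (_ : connect blue y2 w) _.
      by rewrite bs; apply: cross => //; rewrite -e2.
    by apply: cross => //; rewrite -e.
  apply: connect_trans (_ : connect blue x1 w) _; first by apply: cross => //; rewrite eq_sym.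
  apply: connect_trans c21; rewrite bs; by apply: cross => //; rewrite eq_sym.
have Xa : connect red a a := connect0 _ _.
have Xb : connect red a b := connect1 rab.
have Yd : ~~ connect red a d.
  apply: contra nac => h; apply: connect_trans h _; rewrite rs; exact: connect1.
have pab : part a != part b by move: rab => /andP[].
have pcd : part cc != part d by move: rcd => /andP[].
have hub : forall u, connect blue a u.
  have ac : connect blue a cc by apply: (gen a b cc d).
  have ad : connect blue a d by apply: (gen a b d cc) => //; rewrite eq_sym.
  have bc : connect blue b cc by apply: (gen b a cc d) => //; rewrite eq_sym.
  move=> u; case: (boolP (connect red a u)) => hu.
    case: (eqVneq (part u) (part cc)) => e.
      apply: connect_trans ad _; rewrite bs; apply: cross => //; by rewrite e.
    by apply: connect_trans ac _; rewrite bs; apply: cross.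
  case: (eqVneq (part u) (part a)) => e.
    apply: connect_trans ac _; rewrite bs; apply: connect_trans (_ : connect blue u b) bc.
    by rewrite bs; apply: cross => //; rewrite e eq_sym.
  by apply: cross => //; rewrite eq_sym.
by move=> u v; apply: connect_trans (hub v); rewrite bs.
Qed.
End Main.

Theorem lemma4p1 (T : finType) (part : T -> 'I_3) (c : T -> T -> bool) :
  (forall i : 'I_3, exists x : T, part x = i) ->
  (forall i : 'I_3, 2 * #|[set x | part x == i]| <= #|T|) ->
  ~~ odd #|T| ->
  (forall x y, c x y = c y x) ->
  exists R B : {set {set T}},
    [/\ connected_matching (red_rel part c) R,
        connected_matching (blue_rel part c) B,
        [disjoint cover R & cover B] &
        cover R :|: cover B = [set: T]].
Proof.
move=> surj hfair hev hc.
have [x0 _] := surj ord0.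
have [f [ff fp]] := @pm_exists T part x0 hfair hev.
case: (boolP [exists a, exists b, exists cc, exists d,
   [&& red_rel part c a b, red_rel part c cc d & ~~ connect (red_rel part c) a cc]]).
  move=> /existsP[a /existsP[b /existsP[cc /existsP[d /and3P[r1 r2 r3]]]]].
  apply: (@exch _ part c hc) ff fp => x y u v _ _.
  exact: (@spanning _ part c hc a b cc d surj r1 r2 r3 x u).
move=> H.
pose c' := fun x y => ~~ c x y.
have hc' : forall x y, c' x y = c' y x by move=> x y; rewrite /c' hc.
have E1 : red_rel part c =2 blue_rel part c'.
  by move=> x y; rewrite /blue_rel /red_rel /c' negbK.
have E2 : red_rel part c' =2 blue_rel part c by [].
have BC' : forall x y u v, blue_rel part c' x y -> blue_rel part c' u v ->
    connect (blue_rel part c') x u.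
  move=> x y u v; rewrite -!E1 => h1 h2; rewrite -(eq_connect E1).
  case: (boolP (connect (red_rel part c) x u)) => // hn; exfalso.
  move/negP: H; apply; apply/existsP; exists x; apply/existsP; exists y.
  apply/existsP; exists u; apply/existsP; exists v; by rewrite h1 h2 hn.
have [R [B [CR CB D U]]] := @exch _ part c' hc' BC' f ff fp.
exists B, R; split.
- exact: cm_eq (fun x y => esym (E1 x y)) CB.
- exact: cm_eq E2 CR.
- by rewrite disjoint_sym.
- by rewrite setUC.
Qed.
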